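(* For every $\lambda\in\Lambda$, the map $Q^*_\lambda=P_\lambda+Q$ has a unique fixed point $h(\lambda)$ in the closed ball $\{z:|z-1|\le |Q(1)|/p\}$. The resulting function $h:\Lambda\to\{z:|z-1|\le|Q(1)|/p\}$, $\lambda\mapsto h(\lambda)$, is holomorphic on $\Lambda$ (it is the uniform limit on $\Lambda$ of rational functions in $\lambda$ without poles in $\Lambda$, equivalently given by a power series convergent on $\Lambda$).
   Context: Let $p$ be a prime and $\mathbb C_p$ the completion of an algebraic closure of $\mathbb Q_p$, with $p$-adic absolute value $|\cdot|$, $|p|=1/p$. Let $\Lambda=\{\lambda\in\mathbb C_p:|\lambda-1|<1\}$ and $P_\lambda(z)=\frac{\lambda}{p}z^p+\left(1-\frac{\lambda}{p}\right)z^{p+1}$ for $\lambda\in\Lambda$. Let $\rho=p^{-1/(p-1)}$. Fix $\hat r\in|\mathbb C_p^*|$ with $\hat r>1$, $B=\{z:|z|\le\hat r\}$, and let $\mathcal H(B)$ be the power series $\sum a_iz^i$ convergent on $B$ with norm $\|f\|_B=\sup_i|a_i|\hat r^{\,i}$. Fix $Q\in\mathcal H(B)$ with $\|Q\|_B<\rho$. *)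

(* Defs.v *)
From HB Require Import structures.
From mathcomp Require Import all_boot all_order all_algebra.
From mathcomp Require Import boolp classical_sets reals exp.
Set Implicit Arguments.
Unset Strict Implicit.
Unset Printing Implicit Defensive.
Import Order.TTheory GRing.Theory Num.Theory.
Local Open Scope ring_scope.
Local Open Scope classical_set_scope.

Section Defs.
Variables (K : fieldType) (R : realType) (abs : K -> R).

Definition cvg_to (u : nat -> K) (l : K) : Prop :=
  forall eps : R, 0 < eps ->
    exists N : nat, forall n : nat, (N <= n)%N -> abs (u n - l) < eps.

Definition cauchy_seq (u : nat -> K) : Prop :=
  forall eps : R, 0 < eps -> exists N : nat, forall m n : nat,
    (N <= m)%N -> (N <= n)%N -> abs (u m - u n) < eps.

(* C_p characterized up to isometric isomorphism: a complete, algebraically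
   closed field with an ultrametric absolute value such that |p| = 1/p and in
   which the algebraic numbers (over Q) are dense, i.e. the completion of an
   algebraic closure of Q_p. *)
Record is_Cp (p : nat) : Prop := {
  abs_ge0 : forall x, 0 <= abs x;
  abs_eq0 : forall x, (abs x == 0) = (x == 0);
  absM : forall x y, abs (x * y) = abs x * abs y;
  abs_ultra : forall x y, abs (x + y) <= Num.max (abs x) (abs y);
  abs_p : abs (p%:R) = (p%:R)^-1;
  Cp_complete : forall u, cauchy_seq u -> exists l, cvg_to u l;
  Cp_alg_closed : forall q : {poly K}, (1 < size q)%N -> exists x, root q x;
  Cp_alg_dense : forall (x : K) (eps : R), 0 < eps ->
    exists (y : K) (q : {poly rat}),
      [/\ q != 0, root (map_poly ratr q) y & abs (x - y) < eps]
}.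

Definition psum (a : nat -> K) (z : K) (n : nat) : K :=
  \sum_(i < n) a i * z ^+ i.

Definition series_to (a : nat -> K) (z l : K) : Prop := cvg_to (psum a z) l.

Definition ps_eval (a : nat -> K) (z : K) : K :=
  xget 0 [set l | series_to a z l].

Definition in_HB (rhat : R) (a : nat -> K) : Prop :=
  forall z, abs z <= rhat -> exists l, series_to a z l.

Definition normB (rhat : R) (a : nat -> K) : R :=
  sup [set abs (a i) * rhat ^+ i | i in [set: nat]].

Definition inLambda (lam : K) : Prop := abs (lam - 1) < 1.

End Defs.

Definition Plam (K : fieldType) (p : nat) (lam z : K) : K :=
  lam / p%:R * z ^+ p + (1 - lam / p%:R) * z ^+ p.+1.

Definition rho (R : realType) (p : nat) : R :=
  powR (p%:R : R) (- ((p.-1)%:R)^-1).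

(* Main.v *)
Require Import Defs.
From HB Require Import structures.
From mathcomp Require Import all_boot all_order all_algebra.
From mathcomp Require Import boolp classical_sets reals exp.
From mathcomp Require Import ring lra.
Import Order.TTheory GRing.Theory Num.Theory.
Local Open Scope ring_scope.
Set Implicit Arguments.
Unset Strict Implicit.

Section Abs.
Variables (p : nat) (K : fieldType) (R : realType) (abs : K -> R).
Hypothesis Hc : is_Cp abs p.

Lemma a_ge0 x : 0 <= abs x. Proof. exact: (@abs_ge0 _ _ _ _ Hc). Qed.
Lemma a_eq0 x : (abs x == 0) = (x == 0). Proof. exact: (@abs_eq0 _ _ _ _ Hc). Qed.
Lemma aM x y : abs (x * y) = abs x * abs y. Proof. exact: (@absM _ _ _ _ Hc). Qed.
Lemma aU x y : abs (x + y) <= Num.max (abs x) (abs y). Proof. exact: (@abs_ultra _ _ _ _ Hc). Qed.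
Lemma a0 : abs 0 = 0. Proof. by apply/eqP; rewrite a_eq0. Qed.
Lemma a1 : abs 1 = 1.
Proof.
have h := aM 1 1; rewrite mulr1 in h.
have hn : abs 1 != 0 by rewrite a_eq0 oner_neq0.
by apply: (mulfI hn); rewrite -h mulr1.
Qed.
Lemma aN1 : abs (-1) = 1.
Proof.
have h := aM (-1) (-1); rewrite mulrNN mulr1 a1 in h.
have g := a_ge0 (-1).
have : (abs (-1) - 1) * (abs (-1) + 1) = 0 by rewrite mulrDr !mulrBl -h; ring.
move/eqP; rewrite mulf_eq0 => /orP[/eqP|]; first by move/eqP; rewrite subr_eq0 => /eqP.
by rewrite paddr_eq0 // oner_eq0 andbF.
Qed.
Lemma aN x : abs (- x) = abs x.
Proof. by rewrite -mulN1r aM aN1 mul1r. Qed.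
Lemma aB x y : abs (x - y) = abs (y - x).
Proof. by rewrite -aN opprB. Qed.
Lemma aX x n : abs (x ^+ n) = abs x ^+ n.
Proof. elim: n => [|n IH]; by rewrite ?expr0 ?a1 // !exprS aM IH. Qed.
Lemma aV x : abs (x^-1) = (abs x)^-1.
Proof.
have [->|nz] := eqVneq x 0; first by rewrite invr0 a0 invr0.
have h := aM x x^-1; rewrite mulfV // a1 in h.
have hn : abs x != 0 by rewrite a_eq0.
by apply: (mulfI hn); rewrite -h mulfV.
Qed.
Lemma aUB x y M : abs x <= M -> abs y <= M -> abs (x + y) <= M.
Proof. move=> hx hy; apply: le_trans (aU _ _) _; by rewrite ge_max hx hy. Qed.
Lemma aBtr x y z : abs (x - z) <= Num.max (abs (x - y)) (abs (y - z)).
Proof. by have := aU (x - y) (y - z); rewrite addrA subrK. Qed.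
Lemma a_nat n : abs (n%:R) <= 1.
Proof.
elim: n => [|n IH]; first by rewrite a0.
by rewrite mulrSr; apply: aUB => //; rewrite a1.
Qed.
Lemma a_sum n (F : 'I_n -> K) M : 0 <= M -> (forall i, abs (F i) <= M) ->
  abs (\sum_(i < n) F i) <= M.
Proof.
move=> M0 hF; elim/big_ind: _ => //; first by rewrite a0.
by move=> x y; apply: aUB.
Qed.
Lemma a_strict a b : abs b < abs a -> abs (a + b) = abs a.
Proof.
move=> h; apply/eqP; rewrite eq_le; apply/andP; split.
  by apply: le_trans (aU _ _) _; rewrite ge_max lexx ltW.
have := aU (a + b) (- b); rewrite addrK aN => h2.
move: h2; rewrite le_max => /orP[//|h3]; by move: (lt_le_trans h h3); rewrite ltxx.
Qed.
End Abs.

Section NB.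
Variables (p : nat) (K : fieldType) (R : realType) (abs : K -> R).
Hypothesis Hc : is_Cp abs p.
Variable s : R.
Hypothesis s0 : 0 <= s.

Definition nb (f : {poly K}) (M : R) := forall i, abs f`_i * s ^+ i <= M.

Lemma a_sumw I (r : seq I) (P : pred I) (F : I -> K) w M : 0 <= w -> 0 <= M ->
  (forall i, P i -> abs (F i) * w <= M) -> abs (\sum_(i <- r | P i) F i) * w <= M.
Proof.
move=> w0 M0 hF; elim/big_ind: _ => //; first by rewrite (a0 Hc) mul0r.
move=> x y hx hy; have := aU Hc x y; rewrite le_max => /orP[] h.
  by apply: le_trans hx; rewrite ler_wpM2r.
by apply: le_trans hy; rewrite ler_wpM2r.
Qed.

Lemma nb_ge0 f M : nb f M -> 0 <= M.
Proof. move/(_ 0%N); apply: le_trans; by rewrite mulr_ge0 ?exprn_ge0 ?(a_ge0 Hc). Qed.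

Lemma nb_le f a b : a <= b -> nb f a -> nb f b.
Proof. by move=> ab h i; apply: le_trans (h i) ab. Qed.

Lemma nbC c M : abs c <= M -> nb c%:P M.
Proof.
move=> h i; rewrite coefC; case: eqP => [->|_]; first by rewrite expr0 mulr1.
by rewrite (a0 Hc) mul0r; apply: le_trans h; apply: (a_ge0 Hc).
Qed.

Lemma nbCr c M : nb c%:P M -> abs c <= M.
Proof. by move/(_ 0%N); rewrite coefC eqxx expr0 mulr1. Qed.

Lemma nb0 M : 0 <= M -> nb 0 M.
Proof. by move=> M0 i; rewrite coef0 (a0 Hc) mul0r. Qed.

Lemma nbD f g a b : nb f a -> nb g b -> nb (f + g) (Num.max a b).
Proof.
move=> hf hg i; rewrite coefD; have := aU Hc f`_i g`_i; rewrite le_max => /orP[] h.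
  by apply: le_trans (ler_wpM2r (exprn_ge0 _ s0) h) _; rewrite le_max hf.
by apply: le_trans (ler_wpM2r (exprn_ge0 _ s0) h) _; rewrite le_max hg orbT.
Qed.

Lemma nbD' f g M : nb f M -> nb g M -> nb (f + g) M.
Proof. by move=> hf hg; have := nbD hf hg; rewrite maxxx. Qed.

Lemma nbN f a : nb f a -> nb (- f) a.
Proof. by move=> h i; rewrite coefN (aN Hc). Qed.

Lemma nbB f g a b : nb f a -> nb g b -> nb (f - g) (Num.max a b).
Proof. by move=> hf hg; apply: nbD => //; apply: nbN. Qed.

Lemma nbM f g a b : nb f a -> nb g b -> nb (f * g) (a * b).
Proof.
move=> hf hg i; rewrite coefM.
have a0' := nb_ge0 hf; have b0 := nb_ge0 hg.
apply: a_sumw; rewrite ?exprn_ge0 ?mulr_ge0 // => j _.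
have ji : (j <= i)%N by rewrite -ltnS ltn_ord.
have -> : s ^+ i = s ^+ j * s ^+ (i - j) by rewrite -exprD subnKC.
rewrite (aM Hc) mulrACA.
by apply: ler_pM; rewrite ?mulr_ge0 ?exprn_ge0 ?(a_ge0 Hc).
Qed.

Lemma nbX : nb 'X s.
Proof.
move=> i; rewrite coefX; case: eqP => [->|_]; first by rewrite (a1 Hc) mul1r expr1.
by rewrite (a0 Hc) mul0r.
Qed.

Lemma nb1 : nb 1 1.
Proof. by apply: nbC; rewrite (a1 Hc). Qed.

Lemma nbMn f a n : nb f a -> nb (f *+ n) a.
Proof.
move=> h i; rewrite coefMn -mulr_natr (aM Hc); apply: le_trans (h i).
rewrite -mulrA ler_wpM2l ?(a_ge0 Hc) // ler_piMl ?exprn_ge0 //.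
exact: (a_nat Hc).
Qed.

Lemma nb_sum n (F : 'I_n -> {poly K}) a : 0 <= a -> (forall i, nb (F i) a) ->
  nb (\sum_(i < n) F i) a.
Proof.
move=> a0' h i; rewrite coef_sum; apply: a_sumw; rewrite ?exprn_ge0 // => j _.
exact: h.
Qed.

Lemma nbXn f a n : nb f a -> nb (f ^+ n) (a ^+ n).
Proof.
move=> h; elim: n => [|n IH]; first by rewrite !expr0; exact: nb1.
by rewrite !exprS; apply: nbM.
Qed.

Lemma nb_horner f M x : abs x = s -> nb f M -> abs f.[x] <= M.
Proof.
move=> hx h; rewrite horner_coef -[abs _]mulr1; apply: a_sumw => //.
  exact: nb_ge0 h.
by move=> i _; rewrite mulr1 (aM Hc) (aX Hc) hx.
Qed.

Lemma nb_pow1 x y d m : nb x 1 -> nb y 1 -> nb (x - y) d -> nb (x ^+ m - y ^+ m) d.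
Proof.
move=> hx hy hd; rewrite subrXX -[d]mulr1; apply: nbM => //.
apply: nb_sum => // i; rewrite -[1]mulr1; apply: nbM.
  by rewrite -(expr1n _ (m.-1 - i)); apply: nbXn.
by rewrite -(expr1n _ i); apply: nbXn.
Qed.

Lemma nb_pow2 x r m : nb x 1 -> nb (x - 1) r -> nb (x ^+ m - 1) r.
Proof.
move=> hx hr; rewrite subrX1 -[r]mulr1; apply: nbM => //.
apply: nb_sum => // i; by rewrite -(expr1n _ i); apply: nbXn.
Qed.

Lemma nb_pow3 x y r a b : nb x 1 -> nb y 1 -> nb (x - 1) r -> nb (y - 1) r ->
  nb (x ^+ a * y ^+ b - 1) r.
Proof.
move=> hx hy hrx hry.
have -> : x ^+ a * y ^+ b - 1 = (x ^+ a - 1) * y ^+ b + (y ^+ b - 1) by ring.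
apply: nbD'; last exact: nb_pow2.
rewrite -[r]mulr1; apply: nbM; first exact: nb_pow2.
by rewrite -(expr1n _ b); apply: nbXn.
Qed.

Lemma nb_powD x y r d m : nb x 1 -> nb y 1 -> nb (x - 1) r -> nb (y - 1) r ->
  nb (x - y) d -> nb (x ^+ m - y ^+ m - (x - y) *+ m) (d * r).
Proof.
move=> hx hy hrx hry hd.
have -> : x ^+ m - y ^+ m - (x - y) *+ m =
   (x - y) * \sum_(i < m) (x ^+ (m.-1 - i) * y ^+ i - 1).
  by rewrite subrXX sumrB sumr_const card_ord mulrBr mulr_natr.
apply: nbM => //; apply: nb_sum; first exact: nb_ge0 hrx.
by move=> i; apply: nb_pow3.
Qed.
End NB.

Definition Rg (A : comNzRingType) (p : nat) (ip L w : A) :=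
  L * ip * ((1 + w) ^+ p - 1 - w *+ p) + (1 - L * ip) * ((1 + w) ^+ p.+1 - 1 - w *+ p.+1).
Definition Tg (A : comNzRingType) (p : nat) (ip pp c2i Y w G : A) :=
  (Y * w - pp * (Rg p ip (1 + Y) w + G)) * c2i.
Definition Qg (A : comNzRingType) (q : nat -> A) (n : nat) (w : A) :=
  \sum_(i < n) q i * (1 + w) ^+ i.

Lemma Tg_morph (A B : comNzRingType) (f : {rmorphism A -> B}) p ip pp c2i Y w G :
  f (Tg p ip pp c2i Y w G) = Tg p (f ip) (f pp) (f c2i) (f Y) (f w) (f G).
Proof.
by rewrite /Tg /Rg !(rmorphM, rmorphB, rmorphD, rmorph1, rmorphXn, rmorphMn).
Qed.

Lemma Qg_morph (A B : comNzRingType) (f : {rmorphism A -> B}) q n w :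
  f (Qg q n w) = Qg (fun i => f (q i)) n (f w).
Proof.
by rewrite /Qg rmorph_sum; apply: eq_bigr => i _; rewrite !(rmorphM, rmorphD, rmorph1, rmorphXn).
Qed.

Lemma Rg0 (A : comNzRingType) p (ip L : A) : Rg p ip L 0 = 0.
Proof. by rewrite /Rg addr0 !expr1n !mul0rn !subrr ?subr0 !mulr0 addr0. Qed.



Lemma fix_alg (F : comNzRingType) (P q c lam v G Z : F) : P * q = 1 -> (P ^+ 2 - 1) * c = 1 ->
 ((lam - 1) * v - P * ((1 + (lam - 1)) * q * (Z - 1 - v * P) +
   (1 - (1 + (lam - 1)) * q) * ((1 + v) * Z - 1 - (v * P + v)) + G)) * c - v
 = -(P * c) * (lam * q * Z + (1 - lam * q) * ((1 + v) * Z) + G - (1 + v)).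
Proof.
move=> h1 h2; apply/eqP; rewrite -subr_eq0; apply/eqP.
transitivity (v * ((P ^+ 2 - 1) * c - 1) - c * lam * v * (P * q - 1)); first by ring.
by rewrite h1 h2; ring. Qed.

Lemma Tg_fix (F : fieldType) (p : nat) (lam v G : F) :
  p%:R != 0 :> F -> (p%:R ^+ 2 - 1) != 0 :> F ->
  Tg p (p%:R^-1) p%:R ((p%:R ^+ 2 - 1)^-1) (lam - 1) v G - v =
  - (p%:R / (p%:R ^+ 2 - 1)) * (Plam p lam (1 + v) + G - (1 + v)).
Proof.
move=> hp hc; rewrite /Tg /Rg /Plam [(1 + v) ^+ p.+1]exprS mulrSr -[v *+ p]mulr_natr.
apply: fix_alg; [exact: divff | exact: mulfV].
Qed.

Section Est.
Variables (p : nat) (K : fieldType) (R : realType) (abs : K -> R).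
Hypothesis Hc : is_Cp abs p.
Hypothesis pP : prime p.
Variable s : R.
Hypothesis s0 : 0 <= s.

Let P : R := p%:R.
Lemma P_ge1 : 1 <= P.
Proof. by rewrite /P ler1n prime_gt0. Qed.
Lemma P_gt0 : 0 < P.
Proof. by apply: lt_le_trans P_ge1. Qed.
Lemma aP : abs (p%:R : K) = P^-1.
Proof. exact: (@abs_p _ _ _ _ Hc). Qed.
Lemma aPV : abs ((p%:R : K)^-1) = P.
Proof. by rewrite (aV Hc) aP invrK. Qed.
Lemma pK0 : (p%:R : K) != 0.
Proof. by rewrite -(a_eq0 Hc) aP invr_eq0 gt_eqF // P_gt0. Qed.
Lemma aC2 : abs ((p%:R : K) ^+ 2 - 1) = 1.
Proof.
rewrite addrC (a_strict Hc) ?(aN Hc) ?(a1 Hc) // (aX Hc) aP.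
rewrite expr2 -invfM invf_lt1 ?mulr_gt0 ?P_gt0 //.
have := P_ge1; have : (2 <= P) by rewrite /P ler_nat prime_gt1.
move=> h2 h1; nra.
Qed.
Lemma C2_0 : ((p%:R : K) ^+ 2 - 1) != 0.
Proof. by rewrite -(a_eq0 Hc) aC2 oner_eq0. Qed.
Lemma aC2V : abs (((p%:R : K) ^+ 2 - 1)^-1) = 1.
Proof. by rewrite (aV Hc) aC2 invr1. Qed.

Definition ipP : {poly K} := ((p%:R : K)^-1)%:P.
Definition ppP : {poly K} := (p%:R : K)%:P.
Definition c2P : {poly K} := (((p%:R : K) ^+ 2 - 1)^-1)%:P.
Definition TgP (Y w G : {poly K}) := Tg p ipP ppP c2P Y w G.

Notation nb := (nb abs s).

Lemma nb1Y Y t : t <= 1 -> nb Y t -> nb (1 + Y) 1.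
Proof.
move=> t1 hY; apply: nb_le (nbD Hc s0 (nb1 Hc s) hY); by rewrite ge_max lexx t1.
Qed.

Lemma Rg_lip Y t rr w w' d : t <= 1 -> nb Y t -> 0 <= rr -> rr <= 1 ->
  nb w rr -> nb w' rr -> nb (w - w') d ->
  nb (Rg p ipP (1 + Y) w - Rg p ipP (1 + Y) w') (P * (d * rr)).
Proof.
move=> t1 hY r0 r1 hw hw' hd.
set D := fun m => (1 + w) ^+ m - (1 + w') ^+ m - ((1 + w) - (1 + w')) *+ m.
have -> : Rg p ipP (1 + Y) w - Rg p ipP (1 + Y) w' =
  (1 + Y) * ipP * D p + (1 - (1 + Y) * ipP) * D p.+1.
  rewrite /Rg /D !mulrnBl !mulrnDl; ring.
have hx : nb (1 + w) 1 by exact: nb1Y r1 hw.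
have hx' : nb (1 + w') 1 by exact: nb1Y r1 hw'.
have hxr : nb (1 + w - 1) rr by rewrite addrC addKr.
have hxr' : nb (1 + w' - 1) rr by rewrite addrC addKr.
have hxd : nb (1 + w - (1 + w')) d by rewrite opprD addrACA subrr add0r.
have hD m : nb (D m) (d * rr) by rewrite /D; apply: (nb_powD Hc s0).
have hL : nb ((1 + Y) * ipP) P.
  rewrite -[P]mul1r; apply: (nbM Hc s0 (nb1Y t1 hY)).
  by apply: (nbC Hc); rewrite aPV.
have hL' : nb (1 - (1 + Y) * ipP) P.
  apply: nb_le (nbB Hc s0 (nb1 Hc s) hL); by rewrite ge_max lexx P_ge1.
have := nbD Hc s0 (nbM Hc s0 hL (hD p)) (nbM Hc s0 hL' (hD p.+1)).
by rewrite maxxx.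
Qed.


Lemma Tg_diff Y t rr w w' G G' d g : t <= 1 -> nb Y t -> 0 <= rr -> rr <= 1 ->
  nb w rr -> nb w' rr -> nb (w - w') d -> nb (G - G') g ->
  nb (TgP Y w G - TgP Y w' G') (Num.max (t * d) (P^-1 * Num.max (P * (d * rr)) g)).
Proof.
move=> t1 hY r0 r1 hw hw' hd hg.
set R1 := Rg p ipP (1 + Y) w; set R2 := Rg p ipP (1 + Y) w'.
have -> : TgP Y w G - TgP Y w' G' = (Y * (w - w') - ppP * ((R1 - R2) + (G - G'))) * c2P.
  rewrite /TgP /Tg -/R1 -/R2; ring.
rewrite -[X in nb _ X]mulr1; apply: (nbM Hc s0); last by apply: (nbC Hc); rewrite aC2V.
apply: (nbB Hc s0); first exact: (nbM Hc s0 hY hd).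
apply: (nbM Hc s0); first by apply: (nbC Hc); rewrite aP.
apply: (nbD Hc s0) => //; exact: (Rg_lip t1 hY r0 r1 hw hw' hd).
Qed.

Lemma TgP0 Y : TgP Y 0 0 = 0.
Proof. by rewrite /TgP /Tg Rg0 mulr0 addr0 mulr0 subrr mul0r. Qed.

Lemma Tg_contr Y t rr m w w' G G' d : 0 <= t -> t <= 1 -> nb Y t -> 0 <= rr -> rr <= 1 ->
  0 <= m ->
  nb w rr -> nb w' rr -> nb (w - w') d -> nb (G - G') (m * d) ->
  nb (TgP Y w G - TgP Y w' G') (Num.max t (Num.max rr m) * d).
Proof.
move=> t0 t1 hY r0 r1 m0 hw hw' hd hg.
have d0 : 0 <= d := nb_ge0 Hc s0 hd.
apply: nb_le (Tg_diff t1 hY r0 r1 hw hw' hd hg).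
set k := Num.max t (Num.max rr m).
have hk1 : t <= k by rewrite le_max lexx.
have hk2 : rr <= k by rewrite !le_max lexx orbT.
have hk3 : m <= k by rewrite !le_max lexx !orbT.
have P1 := P_ge1; have P0 := P_gt0.
rewrite ge_max; apply/andP; split; first by nra.
rewrite ler_pdivrMl // ge_max; apply/andP; split.
  have := mulr_ge0 (ltW P0) d0; nra.
have k0 : 0 <= k * d by apply: mulr_ge0 => //; apply: le_trans hk3.
apply: (@le_trans _ _ (k * d)); first by rewrite ler_wpM2r.
by rewrite ler_peMl.
Qed.

Lemma Tg_ball Y t rr w G g : 0 <= t -> t <= 1 -> nb Y t -> 0 <= rr -> rr <= 1 ->
  nb w rr -> nb G g -> g <= P * rr -> nb (TgP Y w G) rr.
Proof.
move=> t0 t1 hY r0 r1 hw hG hgr.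
have g0 := nb_ge0 Hc s0 hG.
have h0 : nb 0 rr by exact: (nb0 Hc).
have := Tg_diff t1 hY r0 r1 hw h0 (w := w) (d := rr) (g := g) (G := G) (G' := 0).
rewrite TgP0 !subr0 => /(_ hw hG); apply: nb_le.
have P1 := P_ge1; have P0 := P_gt0.
rewrite ge_max; apply/andP; split; first by nra.
rewrite ler_pdivrMl // ge_max; apply/andP; split => //.
have := mulr_ge0 (ltW P0) r0; nra.
Qed.

Lemma Tg_trunc Y t rr w G G' g : t <= 1 -> nb Y t -> 0 <= rr -> rr <= 1 ->
  nb w rr -> nb (G - G') g -> nb (TgP Y w G - TgP Y w G') g.
Proof.
move=> t1 hY r0 r1 hw hg.
have g0 := nb_ge0 Hc s0 hg.
have h0 : nb (w - w) 0 by rewrite subrr; exact: (nb0 Hc).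
apply: nb_le (Tg_diff t1 hY r0 r1 hw hw h0 hg).
have P1 := P_ge1; have P0 := P_gt0.
rewrite !mul0r !mulr0 ge_max; apply/andP; split => //.
rewrite ler_pdivrMl // ge_max; apply/andP; split; nra.
Qed.

Definition QgP (q : nat -> K) n (w : {poly K}) := Qg (fun i => (q i)%:P) n w.

Lemma Qg_lip q m n rr w w' d : (forall i, abs (q i) <= m) -> 0 <= m -> rr <= 1 ->
  nb w rr -> nb w' rr -> nb (w - w') d -> nb (QgP q n w - QgP q n w') (m * d).
Proof.
move=> hq m0 r1 hw hw' hd.
have d0 := nb_ge0 Hc s0 hd.
rewrite /QgP /Qg -sumrB; apply: (nb_sum Hc s0); first exact: mulr_ge0.
move=> i; rewrite -mulrBr; apply: (nbM Hc s0); first exact: (nbC Hc).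
apply: (nb_pow1 Hc s0); [exact: nb1Y r1 hw | exact: nb1Y r1 hw' |].
by rewrite opprD addrACA subrr add0r.
Qed.

Lemma Qg_bnd q m n rr w : (forall i, abs (q i) <= m) -> 0 <= m -> rr <= 1 ->
  nb w rr -> nb (QgP q n w) m.
Proof.
move=> hq m0 r1 hw; apply: (nb_sum Hc s0) => // i.
rewrite -[m]mulr1; apply: (nbM Hc s0); first exact: (nbC Hc).
by rewrite -(expr1n R i); apply: (nbXn Hc s0); exact: nb1Y r1 hw.
Qed.

Lemma Qg_succ q n rr w : rr <= 1 -> nb w rr ->
  nb (QgP q n.+1 w - QgP q n w) (abs (q n)).
Proof.
move=> r1 hw; rewrite /QgP /Qg big_ord_recr /= addrAC subrr add0r.
rewrite -[X in nb _ X]mulr1; apply: (nbM Hc s0); first exact: (nbC Hc).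
by rewrite -(expr1n R n); apply: (nbXn Hc s0); exact: nb1Y r1 hw.
Qed.

End Est.

Section Real.
Variable R : realType.

Lemma bernoulli (h : R) j : 0 <= h -> 1 + j%:R * h <= (1 + h) ^+ j.
Proof.
move=> h0; elim: j => [|j IH]; first by rewrite mul0r addr0 expr0.
rewrite exprS; apply: le_trans (_ : (1 + h) * (1 + j%:R * h) <= _); last first.
  by rewrite ler_wpM2l // addr_ge0 // ler01.
have : 0 <= j%:R * h * h by rewrite mulr_ge0 ?mulr_ge0.
rewrite -natr1; nra.
Qed.

Lemma geo (k D eps : R) : 0 <= k -> k < 1 -> 0 < eps -> 0 <= D ->
  exists j, k ^+ j * D <= eps.
Proof.
move=> k0 k1 e0 D0.
have [->|kn0] := eqVneq k 0; first by exists 1%N; rewrite expr1 mul0r ltW.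
have kp : 0 < k by rewrite lt_neqAle eq_sym kn0.
set h := k^-1 - 1.
have hp : 0 < h by rewrite /h subr_gt0 invf_gt1.
have ba : 0 <= D / (eps * h) by rewrite divr_ge0 // mulr_ge0 ?ltW.
exists (Num.Def.archi_bound (D / (eps * h))).
set j := Num.Def.archi_bound _.
have hj := archi_boundP ba; rewrite -/j in hj.
have hb := bernoulli j (ltW hp).
have e1 : 1 + h = k^-1 by rewrite /h addrC subrK.
rewrite e1 exprVn in hb.
have kjp : 0 < k ^+ j by rewrite exprn_gt0.
have Ek : k ^+ j * (k ^+ j)^-1 = 1 by rewrite mulfV // gt_eqF.
have : D < eps * (h * j%:R).
  have -> : eps * (h * j%:R) = j%:R * (eps * h) by ring.
  by move: hj; rewrite ltr_pdivrMr ?mulr_gt0.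
move=> hD.
have : eps * (h * j%:R) <= eps * (k ^+ j)^-1.
  rewrite ler_wpM2l ?ltW //; apply: (lt_le_trans _ hb); rewrite mulrC; lra.
move=> h2.
have h3 : D <= eps * (k ^+ j)^-1 by apply: ltW; apply: lt_le_trans h2.
have := ler_wpM2l (ltW kjp) h3; rewrite mulrCA Ek mulr1 //.
Qed.

Lemma approx_contr (Pd : nat -> R -> Prop) (k D : R) (e : nat -> R) :
  0 <= k -> k < 1 -> 0 <= D ->
  (forall n a b, Pd n a -> a <= b -> Pd n b) ->
  (forall n, Pd n D) ->
  (forall n a, 0 <= a -> Pd n a -> Pd n.+1 (Num.max (k * a) (e n))) ->
  (forall eps, 0 < eps -> exists N, forall n, (N <= n)%N -> e n <= eps) ->
  forall eps, 0 < eps -> exists N, forall n, (N <= n)%N -> Pd n eps.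
Proof.
move=> k0 k1 D0 mono hD rec he eps e0.
have [N1 hN1] := he eps e0.
have H j : Pd (N1 + j)%N (Num.max (k ^+ j * D) eps).
  elim: j => [|j IH]; first by rewrite addn0 expr0 mul1r; apply: (mono _ _ _ (hD _)); rewrite le_max lexx.
  rewrite addnS; apply: (mono _ _ _ (rec _ _ _ IH)); first by rewrite le_max (ltW e0) orbT.
  rewrite ge_max; apply/andP; split; last by rewrite le_max hN1 ?leq_addr ?orbT.
  rewrite exprS -mulrA.
  have [hm|hm] := leP (k ^+ j * D) eps.
    rewrite le_max; apply/orP; right.
    by rewrite ler_piMl ?ltW.
  by rewrite le_max lexx.
have [j0 hj0] := geo k0 k1 e0 D0.
exists (N1 + j0)%N => n hn.
have -> : n = (N1 + (n - N1))%N by rewrite subnKC // (leq_trans (leq_addr _ _) hn).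
apply: (mono _ _ _ (H _)); rewrite ge_max lexx andbT.
apply: le_trans hj0; rewrite ler_wpM2r //; apply: ler_wiXn2l => //; first exact: ltW.
by rewrite leq_subRL ?(leq_trans (leq_addr _ _) hn) // (leq_trans _ hn) // addnC.
Qed.
End Real.

Section Seq.
Variables (p : nat) (K : fieldType) (R : realType) (abs : K -> R).
Hypothesis Hc : is_Cp abs p.

Lemma lim_le u l a M N : cvg_to abs u l -> (forall k, (N <= k)%N -> abs (u k - a) <= M) ->
  abs (l - a) <= M.
Proof.
move=> hu hM; rewrite leNgt; apply/negP => hlt.
have M0 : 0 <= M by apply: le_trans (a_ge0 Hc _) (hM N (leqnn N)).
have hp : 0 < abs (l - a) - M by rewrite subr_gt0.
have [N1 hN1] := hu _ hp.
set k := maxn N N1.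
have h1 := hN1 k (leq_maxr _ _); have h2 := hM k (leq_maxl _ _).
have h3 := aBtr Hc l (u k) a.
have hb : abs (l - u k) < abs (l - a).
  by rewrite (aB Hc); apply: (lt_le_trans h1); lra.
have ha : abs (u k - a) < abs (l - a) by apply: le_lt_trans hlt.
move: h3; rewrite le_max leNgt hb /= leNgt ha //.
Qed.

Lemma le0_all (x : R) : (forall e, 0 < e -> x <= e) -> x <= 0.
Proof.
move=> h; rewrite leNgt; apply/negP => hx.
have := h (x / 2) (divr_gt0 hx (ltr0Sn _ 1)); lra.
Qed.

Lemma cvg_uniq u a b : cvg_to abs u a -> cvg_to abs u b -> a = b.
Proof.
move=> ha hb; apply/eqP; rewrite -subr_eq0 -(a_eq0 Hc) eq_le (a_ge0 Hc) andbT.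
apply: le0_all => e e0; have [N hN] := hb e e0.
by apply: (lim_le ha (N := N)) => k hk; apply: ltW; apply: hN.
Qed.

Lemma lim_lew u l a M w N : cvg_to abs u l -> 0 <= w ->
  (forall k, (N <= k)%N -> abs (u k - a) * w <= M) -> abs (l - a) * w <= M.
Proof.
move=> hu w0 hM.
have [wz|wn0] := eqVneq w 0.
  rewrite wz mulr0; apply: (le_trans _ (hM N (leqnn N))); by rewrite wz mulr0.
have wp : 0 < w by rewrite lt_neqAle eq_sym wn0.
rewrite -ler_pdivlMr //; apply: (lim_le hu (N := N)) => k hk.
by rewrite ler_pdivlMr // hM.
Qed.

Lemma cvgB u v A B : cvg_to abs u A -> cvg_to abs v B ->
  cvg_to abs (fun k => u k - v k) (A - B).
Proof.
move=> hu hv e e0; have [N1 h1] := hu e e0; have [N2 h2] := hv e e0.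
exists (maxn N1 N2) => k hk.
have -> : u k - v k - (A - B) = (u k - A) + - (v k - B) by ring.
apply: le_lt_trans (aU Hc _ _) _; rewrite gt_max (aN Hc) h1 ?h2 //.
  exact: leq_trans (leq_maxr _ _) hk.
exact: leq_trans (leq_maxl _ _) hk.
Qed.

Lemma cvgS u A : cvg_to abs u A -> cvg_to abs (fun k => u k.+1) A.
Proof. move=> hu e e0; have [N h] := hu e e0; exists N => k hk; apply: h; exact: leqW. Qed.

Lemma tele u eps N : 0 <= eps -> (forall k, (N <= k)%N -> abs (u k.+1 - u k) <= eps) ->
  forall k j, (N <= k)%N -> abs (u (k + j)%N - u k) <= eps.
Proof.
move=> e0 h k j hk; elim: j => [|j IH]; first by rewrite addn0 subrr (a0 Hc).
apply: le_trans (aBtr Hc _ (u (k + j)%N) _) _; rewrite ge_max IH andbT addnS.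
by apply: h; rewrite (leq_trans hk) ?leq_addr.
Qed.

Lemma consec_cvg u : (forall eps, 0 < eps -> exists N, forall k, (N <= k)%N ->
  abs (u k.+1 - u k) <= eps) -> exists l, cvg_to abs u l.
Proof.
move=> h; apply: (@Cp_complete _ _ _ _ Hc) => e e0.
have [N hN] := h (e / 2) (divr_gt0 e0 (ltr0Sn _ 1)).
have e2 : 0 <= e / 2 by rewrite ltW // divr_gt0.
exists N => m n hm hn.
have T := tele e2 hN.
have hm' := T N (m - N)%N (leqnn N); rewrite subnKC // in hm'.
have hn' := T N (n - N)%N (leqnn N); rewrite subnKC // in hn'.
apply: le_lt_trans (aBtr Hc _ (u N) _) _; rewrite gt_max.
rewrite (aB Hc (u N)); apply/andP; split; apply: le_lt_trans; eauto; lra.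
Qed.

Lemma ps_eval_eq a z l : series_to abs a z l -> ps_eval abs a z = l.
Proof.
move=> h; have ex : exists l, series_to abs a z l by exists l.
have := xgetPex 0 ex; rewrite /ps_eval => h2.
exact: cvg_uniq h2 h.
Qed.

End Seq.

Fixpoint witer (p : nat) (K : fieldType) (Q : nat -> K) (k : nat) : {poly K} :=
  match k with 0%N => 0 | k'.+1 => TgP p 'X (witer p Q k') (QgP Q k' (witer p Q k')) end.

Section Main.
Variables (p : nat) (K : fieldType) (R : realType) (abs : K -> R).
Hypothesis Hc : is_Cp abs p.
Hypothesis pP : prime p.
Variables (Q : nat -> K) (m : R).
Hypothesis hQ : forall i, abs (Q i) <= m.
Hypothesis m0 : 0 <= m.
Hypothesis m1 : m < 1.
Hypothesis hQ0 : forall eps, 0 < eps -> exists N, forall n, (N <= n)%N -> abs (Q n) <= eps.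

Let P : R := p%:R.
Let P1 : 1 <= P. Proof. by rewrite /P ler1n prime_gt0. Qed.
Let P0 : 0 < P. Proof. exact: lt_le_trans ltr01 P1. Qed.
Let rr := m / P.
Lemma rr0 : 0 <= rr. Proof. by rewrite /rr divr_ge0 // ltW. Qed.
Lemma rrm : rr <= m. Proof. by rewrite /rr ler_pdivrMr // ler_peMr. Qed.
Lemma rr1 : rr < 1. Proof. exact: le_lt_trans rrm m1. Qed.
Lemma mrr : m <= P * rr. Proof. by rewrite /rr mulrC divfK // gt_eqF. Qed.

Let w := witer p Q.

Lemma w_ball s : 0 <= s -> s <= 1 -> forall k, nb abs s (w k) rr.
Proof.
move=> s0 s1; elim=> [|k IH]; first exact: (nb0 Hc s rr0).
apply: (Tg_ball Hc pP s0 s0 s1 (nbX Hc s0) rr0 (ltW rr1) IH _ mrr).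
exact: (Qg_bnd Hc s0 _ hQ m0 (ltW rr1) IH).
Qed.

Lemma w_diff s : 0 <= s -> s < 1 -> forall eps, 0 < eps ->
  exists N, forall k, (N <= k)%N -> nb abs s (w k.+1 - w k) eps.
Proof.
move=> s0 s1.
set kap := Num.max s (Num.max rr m).
have k0 : 0 <= kap by rewrite le_max s0.
have k1 : kap < 1 by rewrite !gt_max s1 rr1 m1.
apply: (@approx_contr R (fun n a => nb abs s (w n.+1 - w n) a) kap rr (fun n => abs (Q n)) k0 k1 rr0).
- by move=> n a b h ab; apply: nb_le h.
- move=> n; have := nbB Hc s0 (w_ball s0 (ltW s1) n.+1) (w_ball s0 (ltW s1) n).
  by rewrite maxxx.
- move=> n a a0 ha.
  have hw1 := w_ball s0 (ltW s1) n.+1; have hw0 := w_ball s0 (ltW s1) n.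
  have -> : w n.+2 - w n.+1 =
     (TgP p 'X (w n.+1) (QgP Q n.+1 (w n.+1)) - TgP p 'X (w n.+1) (QgP Q n (w n.+1))) +
     (TgP p 'X (w n.+1) (QgP Q n (w n.+1)) - TgP p 'X (w n) (QgP Q n (w n))).
    by rewrite addrA subrK.
  rewrite maxC; apply: (nbD Hc s0).
    apply: (Tg_trunc Hc pP s0 (ltW s1) (nbX Hc s0) rr0 (ltW rr1) hw1).
    exact: (Qg_succ Hc s0 _ _ (ltW rr1) hw1).
  apply: (Tg_contr Hc pP s0 s0 (ltW s1) (nbX Hc s0) rr0 (ltW rr1) m0 hw1 hw0 ha).
  exact: (Qg_lip Hc s0 _ hQ m0 (ltW rr1) hw1 hw0 ha).
- exact: hQ0.
Qed.


Lemma nb_tele s f e N : 0 <= s -> (forall k, (N <= k)%N -> nb abs s (f k.+1 - f k) e) ->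
  forall k j, (N <= k)%N -> nb abs s (f (k + j)%N - f k) e.
Proof.
move=> s0 h k j hk; elim: j => [|j IH].
  rewrite addn0 subrr; apply: (nb0 Hc s); exact: (nb_ge0 Hc s0 (h N (leqnn N))).
have -> : f (k + j.+1)%N - f k = (f (k + j).+1 - f (k + j)%N) + (f (k + j)%N - f k).
  by rewrite addnS addrA subrK.
apply: (nbD' Hc s0) => //; apply: h; exact: leq_trans hk (leq_addr _ _).
Qed.

Lemma oneB (A : zmodType) (c a b : A) : (c + a) - (c + b) = a - b.
Proof. by rewrite opprD addrACA subrr add0r. Qed.

Definition cf i := xget 0 [set l | cvg_to abs (fun k => (1 + w k)`_i) l].

Lemma cf_cvg i : cvg_to abs (fun k => (1 + w k)`_i) (cf i).
Proof.
apply: xgetPex; apply: (consec_cvg Hc) => e e0.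
set h := (2^-1 : R).
have h0 : 0 < h by rewrite /h invr_gt0 ltr0Sn.
have h1 : h < 1 by rewrite /h invf_lt1 ?ltr0Sn // ltr1n.
have [N hN] := w_diff (ltW h0) h1 (mulr_gt0 e0 (exprn_gt0 i h0)).
exists N => k hk; have := hN k hk i.
rewrite -coefB oneB ler_pM2r ?exprn_gt0 //.
Qed.

Lemma horner_oneB (a b : {poly K}) x : (1 + a).[x] - (1 + b).[x] = (a - b).[x].
Proof. by rewrite !hornerD hornerN oneB. Qed.

Lemma main_pt x : abs x < 1 -> exists l,
  cvg_to abs (fun k => (1 + w k).[x]) l /\ series_to abs cf x l.
Proof.
move=> hx; set s := abs x.
have s0 : 0 <= s by exact: (a_ge0 Hc).
have hd := w_diff s0 hx.
have [l hl] : exists l, cvg_to abs (fun k => (1 + w k).[x]) l.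
  apply: (consec_cvg Hc) => e e0; have [N hN] := hd e e0; exists N => k hk.
  rewrite horner_oneB; exact: (nb_horner Hc s0 (erefl _) (hN k hk)).
exists l; split => // e e0.
have e2 : 0 < e / 2 by rewrite divr_gt0 // ltr0Sn.
have [N hN] := hd _ e2.
have T := nb_tele s0 hN.
have [N' hN'] := hl _ e2.
set k := maxn N N'.
have hkN : (N <= k)%N by exact: leq_maxl.
have hc i : abs (cf i - (1 + w k)`_i) * s ^+ i <= e / 2.
  apply: (lim_lew Hc (cf_cvg i) (exprn_ge0 _ s0) (N := k)) => j hj.
  have := T k (j - k)%N hkN; rewrite subnKC // => /(_ i).
  by rewrite -coefB oneB.
exists (size (1 + w k)) => n hn.
have -> : psum cf x n - l = (psum cf x n - (1 + w k).[x]) + ((1 + w k).[x] - l) by rewrite addrA subrK.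
apply: le_lt_trans (aU Hc _ _) _; rewrite gt_max; apply/andP; split; last first.
  apply: lt_trans (hN' k (leq_maxr _ _)) _; rewrite ltr_pdivrMr ?ltr0Sn //; lra.
apply: le_lt_trans (_ : e / 2 < e); last by lra.
rewrite /psum (horner_coef_wide _ hn) -sumrB -[abs _]mulr1.
apply: (a_sumw Hc); rewrite ?ler01 ?ltW // => i _.
by rewrite -mulrBl mulr1 (aM Hc) (aX Hc).
Qed.


Hypothesis hconv : forall z, abs z <= 1 -> exists l, series_to abs Q z l.

Definition Tk (x a G : K) := Tg p (p%:R^-1) p%:R ((p%:R ^+ 2 - 1)^-1) x a G.

Lemma TkC x a G : (Tk x a G)%:P = TgP p x%:P a%:P G%:P.
Proof. by rewrite /Tk (Tg_morph (@polyC K)). Qed.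

Lemma QkC k a : (Qg Q k a)%:P = QgP Q k a%:P.
Proof. by rewrite (Qg_morph (@polyC K)). Qed.

Lemma wS_horner x k : (w k.+1).[x] = Tk x ((w k).[x]) (Qg Q k ((w k).[x])).
Proof.
transitivity (horner_eval x (TgP p 'X (w k) (QgP Q k (w k)))); first by [].
rewrite (Tg_morph (horner_eval x)) /ipP /ppP /c2P /Tk.
congr Tg; try exact: hornerC; try exact: hornerX.
rewrite (Qg_morph (horner_eval x)) /Qg; apply: eq_bigr => i _.
by congr (_ * _); exact: hornerC.
Qed.

Section Pt.
Variable x : K.
Hypothesis hx : abs x < 1.
Let s := abs x.
Let s0 : 0 <= s. Proof. exact: (a_ge0 Hc). Qed.
Let kap := Num.max s (Num.max rr m).
Let k0 : 0 <= kap. Proof. by rewrite le_max s0. Qed.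
Let k1 : kap < 1. Proof. by rewrite !gt_max hx rr1 m1. Qed.
Let hX : nb abs s x%:P s. Proof. exact: (nbC Hc). Qed.

Lemma sc_contr a b G G' : abs a <= rr -> abs b <= rr -> abs (G - G') <= m * abs (a - b) ->
  abs (Tk x a G - Tk x b G') <= kap * abs (a - b).
Proof.
move=> ha hb hG; apply: (@nbCr _ _ _ s); rewrite polyCB !TkC.
apply: (Tg_contr Hc pP s0 s0 (ltW hx) hX rr0 (ltW rr1) m0); try by apply: (nbC Hc).
- by rewrite -polyCB; apply: (nbC Hc).
- by rewrite -polyCB; apply: (nbC Hc).
Qed.

Lemma sc_trunc a G G' : abs a <= rr -> abs (Tk x a G - Tk x a G') <= abs (G - G').
Proof.
move=> ha; apply: (@nbCr _ _ _ s); rewrite polyCB !TkC.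
apply: (Tg_trunc Hc pP s0 (ltW hx) hX rr0 (ltW rr1)); first by apply: (nbC Hc).
by rewrite -polyCB; apply: (nbC Hc).
Qed.

Lemma sc_Qlip k a b : abs a <= rr -> abs b <= rr -> abs (Qg Q k a - Qg Q k b) <= m * abs (a - b).
Proof.
move=> ha hb; apply: (@nbCr _ _ _ s); rewrite polyCB !QkC.
apply: (Qg_lip Hc s0 _ hQ m0 (ltW rr1)); try by apply: (nbC Hc).
by rewrite -polyCB; apply: (nbC Hc).
Qed.

Lemma sc_zero G : abs (Tk x 0 G) = abs G / P.
Proof.
rewrite /Tk /Tg Rg0 mulr0 !add0r mulNr (aN Hc) !(aM Hc) (aC2V Hc pP) mulr1.
by rewrite (aP Hc) mulrC.
Qed.

Let PS a := ps_eval abs Q (1 + a).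

Lemma PS_cvg a : abs a <= 1 -> series_to abs Q (1 + a) (PS a).
Proof.
move=> ha; have h1 : abs (1 + a) <= 1 by apply: (aUB Hc) => //; rewrite (a1 Hc).
have [l hl] := hconv h1; by rewrite /PS (ps_eval_eq Hc hl).
Qed.

Lemma PS_lip a b : abs a <= rr -> abs b <= rr -> abs (PS a - PS b) <= m * abs (a - b).
Proof.
move=> ha hb.
have ha1 : abs a <= 1 by apply: le_trans ha (ltW rr1).
have hb1 : abs b <= 1 by apply: le_trans hb (ltW rr1).
have := cvgB Hc (PS_cvg ha1) (PS_cvg hb1).
rewrite -[X in abs X <= _]subr0 => h; apply: (lim_le Hc h (N := 0%N)) => k _.
by rewrite subr0; apply: sc_Qlip.
Qed.

Lemma fix_pt l : cvg_to abs (fun k => (1 + w k).[x]) l ->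
  [/\ abs (l - 1) <= rr, Tk x (l - 1) (PS (l - 1)) = l - 1,
    abs (l - 1) <= abs (ps_eval abs Q 1) / P &
    forall u, abs u <= rr -> Tk x u (PS u) = u -> u = l - 1].
Proof.
move=> hl; set V := l - 1.
have hv : cvg_to abs (fun k => (w k).[x]) V.
  have hc : cvg_to abs (fun _ : nat => (1 : K)) 1.
    by move=> e e0; exists 0%N => k _; rewrite subrr (a0 Hc).
  have := cvgB Hc hl hc.
  have -> : (fun k => (1 + w k).[x] - 1) = (fun k => (w k).[x]).
    by apply: funext => k; rewrite hornerD hornerE addrAC subrr add0r.
  by [].
have hvb k : abs (w k).[x] <= rr.
  exact: (nb_horner Hc s0 (erefl _) (w_ball s0 (ltW hx) k)).
have hV : abs V <= rr.
  rewrite -[V]subr0; apply: (lim_le Hc hv (N := 0%N)) => k _; by rewrite subr0.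
have hV1 : abs V <= 1 by apply: le_trans hV (ltW rr1).
have kap1 : kap <= 1 by apply: ltW.
have fixV : Tk x V (PS V) = V.
  apply/eqP; rewrite -subr_eq0 -(a_eq0 Hc) eq_le (a_ge0 Hc) andbT.
  apply: (le0_all (R := R)) => e e0.
  have hs1 := PS_cvg hV1; have [N1 h1] := hs1 e e0.
  have [N2 h2] := hv e e0.
  set k := maxn N1 N2.
  have -> : Tk x V (PS V) - V = (Tk x V (PS V) - Tk x V (Qg Q k V)) +
     (Tk x V (Qg Q k V) - Tk x (w k).[x] (Qg Q k (w k).[x])) + ((w k.+1).[x] - V).
    rewrite wS_horner; ring.
  apply: (aUB Hc); first apply: (aUB Hc).
  - apply: le_trans (sc_trunc _ _ hV) _; rewrite (aB Hc); apply: ltW.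
    exact: (h1 k (leq_maxl _ _)).
  - apply: le_trans (sc_contr hV (hvb k) (sc_Qlip _ hV (hvb k))) _.
    apply: le_trans (_ : abs (V - (w k).[x]) <= e).
      by rewrite ler_piMl ?(a_ge0 Hc).
    by rewrite (aB Hc); apply: ltW; apply: h2; exact: leq_maxr.
  - apply: ltW; apply: h2; apply: leqW; exact: leq_maxr.
have fixu u : abs u <= rr -> Tk x u (PS u) = u -> abs (V - u) <= kap * abs (V - u).
  move=> hu fu; rewrite -{1}fixV -{1}fu.
  by apply: sc_contr => //; apply: PS_lip.
split => //.
- have h0 : abs (0 : K) <= rr by rewrite (a0 Hc) rr0.
  have E : V = (Tk x V (PS V) - Tk x 0 (PS 0)) + Tk x 0 (PS 0) by rewrite subrK fixV.
  have hb1 : abs (Tk x V (PS V) - Tk x 0 (PS 0)) <= kap * abs V.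
    have := sc_contr hV h0 (PS_lip hV h0); by rewrite subr0.
  have hb2 : abs (Tk x 0 (PS 0)) = abs (ps_eval abs Q 1) / P by rewrite sc_zero /PS addr0.
  have r0 : 0 <= abs (ps_eval abs Q 1) / P by rewrite divr_ge0 ?(a_ge0 Hc) ?ltW.
  have := aU Hc (Tk x V (PS V) - Tk x 0 (PS 0)) (Tk x 0 (PS 0)); rewrite -E hb2.
  rewrite le_max => /orP[h|//].
  have : abs V <= kap * abs V by apply: le_trans h hb1.
  move=> hk; have := a_ge0 Hc V; have := k1; move: r0; nra.
- move=> u hu fu; have := fixu u hu fu => h.
  have : abs (V - u) <= 0 by have := a_ge0 Hc (V - u); have := k1; nra.
  move=> h2; apply/eqP; rewrite eq_sym -subr_eq0 -(a_eq0 Hc) eq_le h2 (a_ge0 Hc) //.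
Qed.
End Pt.

End Main.

Unset Implicit Arguments.
Set Strict Implicit.

Theorem proposition3p2 (p : nat) (K : fieldType) (R : realType) (abs : K -> R)
    (rhat : R) (Q : nat -> K) :
  prime p -> is_Cp abs p ->
  (exists c : K, c != 0 /\ abs c = rhat) -> 1 < rhat ->
  in_HB abs rhat Q -> normB abs rhat Q < rho R p ->
  exists h : K -> K,
    (forall lam : K, inLambda abs lam ->
       [/\ abs (h lam - 1) <= abs (ps_eval abs Q 1) / p%:R,
           Plam p lam (h lam) + ps_eval abs Q (h lam) = h lam
         & forall z : K, abs (z - 1) <= abs (ps_eval abs Q 1) / p%:R ->
             Plam p lam z + ps_eval abs Q z = z -> z = h lam]) /\
    (exists c : nat -> K, forall lam : K, inLambda abs lam ->
       series_to abs c (lam - 1) (h lam)).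
Proof.
move=> pP Hc [c0 [c0nz c0abs]] rh1 HB hnorm.
set m := normB abs rhat Q.
have rh0 : 0 <= rhat by apply: le_trans (ltW rh1); exact: ler01.
have [B hB] : exists B, forall i, abs (Q i) * rhat ^+ i <= B.
  have [l hl] : exists l, series_to abs Q c0 l by apply: HB; rewrite c0abs.
  have [N hN] := hl 1 ltr01.
  exists (1 + \sum_(i < N) abs (Q i) * rhat ^+ i) => i.
  have s0 : 0 <= \sum_(i < N) abs (Q i) * rhat ^+ i.
    by apply: sumr_ge0 => j _; rewrite mulr_ge0 ?exprn_ge0 ?(a_ge0 Hc).
  have [iN|Ni] := ltnP i N.
    rewrite (bigD1 (Ordinal iN)) //=; set S' := \sum_(_ < N | _) _.
    have : 0 <= S' by apply: sumr_ge0 => j _; rewrite mulr_ge0 ?exprn_ge0 ?(a_ge0 Hc).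
    lra.
  apply: le_trans (_ : 1 <= _); last by rewrite lerDl.
  have E : Q i * c0 ^+ i = psum Q c0 i.+1 - psum Q c0 i.
    by rewrite /psum big_ord_recr /= addrAC subrr add0r.
  rewrite -c0abs -(aX Hc) -(aM Hc) E.
  have := aBtr Hc (psum Q c0 i.+1) l (psum Q c0 i).
  move=> h; apply: le_trans h _; rewrite ge_max (aB Hc l).
  by rewrite !ltW // hN // leqW.
have hsup : has_sup [set abs (Q i) * rhat ^+ i | i in [set: nat]].
  split; first by exists (abs (Q 0%N) * rhat ^+ 0); exists 0%N.
  by exists B => y [i _ <-].
have hQm i : abs (Q i) * rhat ^+ i <= m.
  by apply: (sup_upper_bound hsup); exists i.
have hQ i : abs (Q i) <= m.
  apply: le_trans (hQm i); rewrite ler_peMr ?(a_ge0 Hc) //.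
  by apply: exprn_ege1; apply: ltW.
have m0 : 0 <= m by apply: le_trans (hQ 0%N); exact: (a_ge0 Hc).
have m1 : m < 1.
  apply: lt_le_trans hnorm _; rewrite /rho.
  have hp1 : (1 : R) <= p%:R by rewrite ler1n prime_gt0.
  have he : - ((p.-1)%:R : R)^-1 <= 0 by rewrite oppr_le0 invr_ge0.
  by have := ler_powR hp1 he; rewrite powRr0.
have hconv z : abs z <= 1 -> exists l, series_to abs Q z l.
  by move=> hz; apply: HB; apply: le_trans hz (ltW rh1).
have hQ0 : forall eps, 0 < eps -> exists N, forall n, (N <= n)%N -> abs (Q n) <= eps.
  have [l hl] : exists l, series_to abs Q 1 l by apply: hconv; rewrite (a1 Hc).
  move=> e e0; have [N hN] := hl e e0; exists N => n hn.
  have E : Q n = psum Q 1 n.+1 - psum Q 1 n.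
    by rewrite /psum big_ord_recr /= addrAC subrr add0r expr1n mulr1.
  rewrite E; have := aBtr Hc (psum Q 1 n.+1) l (psum Q 1 n).
  move=> h; apply: le_trans h _; rewrite ge_max (aB Hc l).
  by rewrite !ltW // hN // leqW.
have hQ1 : abs (ps_eval abs Q 1) <= m.
  have [l hl] : exists l, series_to abs Q 1 l by apply: hconv; rewrite (a1 Hc).
  rewrite (ps_eval_eq Hc hl) -[l]subr0.
  apply: (lim_le Hc (hl : cvg_to abs (psum Q 1) l) (N := 0%N)) => k _.
  rewrite subr0 /psum; apply: (a_sum Hc) => // i.
  by rewrite expr1n mulr1.
have pK0 : (p%:R : K) != 0 := pK0 Hc pP.
have c20 := C2_0 Hc pP.
have fac0 : - ((p%:R : K) / ((p%:R : K) ^+ 2 - 1)) != 0.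
  by rewrite oppr_eq0 mulf_neq0 // invr_eq0.
exists (fun lam => ps_eval abs (cf p abs Q) (lam - 1)); split; last first.
  exists (cf p abs Q) => lam hlam.
  have [l [hl hs]] := main_pt Hc pP hQ m0 m1 hQ0 hlam.
  by rewrite (ps_eval_eq Hc hs).
move=> lam hlam.
have [l [hl hs]] := main_pt Hc pP hQ m0 m1 hQ0 hlam.
rewrite (ps_eval_eq Hc hs).
have [hV fixV hVr uniq] := fix_pt Hc pP hQ m0 m1 hconv hlam hl.
have hlV : 1 + (l - 1) = l by rewrite addrC subrK.
split => //.
- have := Tg_fix lam (l - 1) (ps_eval abs Q (1 + (l - 1))) pK0 c20.
  rewrite /Tk in fixV; rewrite fixV subrr hlV => /esym /eqP.
  rewrite mulf_eq0 (negbTE fac0) /= subr_eq0 => /eqP //.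
- move=> z hz fz.
  have hu : abs (z - 1) <= m / p%:R.
    apply: le_trans hz _; rewrite ler_pM2r // invr_gt0 ltr0n prime_gt0 //.
  have hz1 : 1 + (z - 1) = z by rewrite addrC subrK.
  have := uniq (z - 1) hu.
  have fx : Tk p (lam - 1) (z - 1) (ps_eval abs Q (1 + (z - 1))) = z - 1.
    apply/eqP; rewrite -subr_eq0; apply/eqP.
    rewrite /Tk (Tg_fix lam (z - 1) _ pK0 c20) hz1 fz subrr mulr0 //.
  move=> /(_ fx) => e; by rewrite -hlV -e hz1.
Qed.
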